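(* Let $(X,\mathscr{A},\mu)$ be a $\sigma$-finite measure space and $\phi$ a nonsingular transformation of $X$ such that $\mathsf{h}_\phi<\infty$ a.e. $[\mu]$. Then the following are equivalent: (i) $\mathsf{E}(\mathsf{h}_{\phi^n})=\mathsf{h}_{\phi^n}$ a.e. $[\mu]$ for all $n\in\mathbb{N}$; (ii) $\mathsf{h}_{\phi^{n+1}}\circ\phi=\mathsf{h}_\phi\circ\phi\cdot\mathsf{h}_{\phi^n}$ a.e. $[\mu]$ for all $n\in\mathbb{N}$. Moreover, if (i) holds, then: (iii) $\mathsf{h}_{\phi^{m+n}}\circ\phi^n=\mathsf{h}_\phi\circ\phi\cdots\mathsf{h}_\phi\circ\phi^n\cdot\mathsf{h}_{\phi^m}$ a.e. $[\mu]$ for all $m\in\mathbb{Z}_+$, $n\in\mathbb{N}$; (iv) $\mathsf{h}_{\phi^{m+n}}\circ\phi^n=\mathsf{h}_{\phi^n}\circ\phi^n\cdot\mathsf{h}_{\phi^m}$ a.e. $[\mu]$ for all $m\in\mathbb{Z}_+$, $n\in\mathbb{N}$; (v) $\mathsf{h}_{\phi^n}\circ\phi^n=\mathsf{h}_\phi\circ\phi\cdots\mathsf{h}_\phi\circ\phi^n$ a.e. $[\mu]$ for all $n\in\mathbb{N}$; (vi) $\mathsf{h}_{\phi^{n+1}}\circ\phi^n=\mathsf{h}_\phi\circ\phi^0\cdots\mathsf{h}_\phi\circ\phi^n$ a.e. $[\mu]$ for all $n\in\mathbb{Z}_+$.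
   Context: $\mathbb{N}=\{1,2,\dots\}$, $\mathbb{Z}_+=\{0,1,\dots\}$. Conventions: $0\cdot\infty=0$, $1/0=\infty$, $0/0=1$. Nonsingular: $\phi^{-1}(\Delta)\in\mathscr{A}$ for $\Delta\in\mathscr{A}$ and $\mu(\phi^{-1}(\Delta))=0$ when $\mu(\Delta)=0$. $\phi^n$ is the $n$-fold composition ($\phi^0=\mathrm{id}_X$), $\mathsf{h}_{\phi^n}$ the Radon–Nikodym derivative of $\mu\circ(\phi^n)^{-1}$ w.r.t. $\mu$. $\mathsf{E}(f)$ is the conditional expectation of an $\mathscr{A}$-measurable $f\colon X\to[0,\infty]$ w.r.t. $\phi^{-1}(\mathscr{A})$: the a.e. unique $\phi^{-1}(\mathscr{A})$-measurable function with $\int(g\circ\phi)f\,\mathrm{d}\mu=\int(g\circ\phi)\mathsf{E}(f)\,\mathrm{d}\mu$ for all $\mathscr{A}$-measurable $g\ge0$. *)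

(* Defs.v *)
From HB Require Import structures.
From mathcomp Require Import all_boot all_order all_algebra.
From mathcomp Require Import all_classical all_reals all_analysis measurable_realfun.
Set Implicit Arguments. Unset Strict Implicit. Unset Printing Implicit Defensive.
Import Order.TTheory GRing.Theory Num.Theory.
Local Open Scope classical_set_scope.
Local Open Scope ring_scope.
Local Open Scope ereal_scope.

Section Defs.
Context {d : measure_display} {T : measurableType d} {R : realType}.

Definition nonsingular (mu : {measure set T -> \bar R}) (phi : T -> T) : Prop :=
  measurable_fun setT phi /\
  forall A : set T, measurable A -> mu A = 0 -> mu (phi @^-1` A) = 0.

Definition is_RN_deriv_iter (mu : {measure set T -> \bar R}) (phi : T -> T)
    (n : nat) (h : T -> \bar R) : Prop :=
  measurable_fun setT h /\ (forall x, 0 <= h x) /\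
  forall A : set T, measurable A ->
    mu (iter n phi @^-1` A) = \int[mu]_(x in A) h x.

(* g is phi^{-1}(A)-measurable: preimages of Borel sets of \bar R under g
   lie in the sigma-algebra {phi^{-1}(D) | D measurable} *)
Definition preimage_measurable (phi : T -> T) (g : T -> \bar R) : Prop :=
  forall B : set (\bar R), measurable B ->
    exists D : set T, measurable D /\ g @^-1` B = phi @^-1` D.

(* g is (a version of) the conditional expectation E(f) of f w.r.t. phi^{-1}(A) *)
Definition is_condexp (mu : {measure set T -> \bar R}) (phi : T -> T)
    (f g : T -> \bar R) : Prop :=
  preimage_measurable phi g /\ (forall x, 0 <= g x) /\
  forall u : T -> \bar R, measurable_fun setT u -> (forall x, 0 <= u x) ->
    \int[mu]_x (u (phi x) * f x) = \int[mu]_x (u (phi x) * g x).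

Definition condexp_fixed (mu : {measure set T -> \bar R}) (phi : T -> T)
    (f : T -> \bar R) : Prop :=
  exists g, is_condexp mu phi f g /\ {ae mu, forall x, g x = f x}.

End Defs.

(* Main.v *)
Require Import Defs.
From HB Require Import structures.
From mathcomp Require Import all_boot all_order all_algebra.
From mathcomp Require Import all_classical all_reals all_analysis measurable_realfun.
Import Order.TTheory GRing.Theory Num.Theory.
Local Open Scope classical_set_scope.
Local Open Scope ring_scope.
Local Open Scope ereal_scope.
From mathcomp Require Import lra.

Section H.
Context (d : measure_display) (T : measurableType d) (R : realType)
  (mu : {measure set T -> \bar R}).

Lemma ae_pull (psi : T -> T) (P : T -> Prop) :
  (forall N, measurable N -> mu N = 0 ->
     measurable (psi @^-1` N) /\ mu (psi @^-1` N) = 0) ->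
  {ae mu, forall x, P x} -> {ae mu, forall x, P (psi x)}.
Proof.
move=> H [N [mN N0 sN]].
have [m0 z0] := H N mN N0.
exists (psi @^-1` N); split => // x /= Px; apply: sN => /=; exact: Px.
Qed.

Lemma iter_meas (phi : T -> T) : measurable_fun setT phi ->
  forall k D, measurable D -> measurable (iter k phi @^-1` D).
Proof.
move=> mphi; elim=> [|k IH] D mD //=.
have -> : iter k.+1 phi @^-1` D = iter k phi @^-1` (phi @^-1` D) by [].
apply: IH; rewrite -[X in measurable X]setTI; exact: mphi.
Qed.

Lemma iter_null (phi : T -> T) : nonsingular mu phi ->
  forall k N, measurable N -> mu N = 0 ->
  measurable (iter k phi @^-1` N) /\ mu (iter k phi @^-1` N) = 0.
Proof.
move=> [mphi ns]; elim=> [|k IH] N mN N0 //=.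
have -> : iter k.+1 phi @^-1` N = iter k phi @^-1` (phi @^-1` N) by [].
apply: IH; first by rewrite -[X in measurable X]setTI; exact: mphi.
exact: ns.
Qed.

End H.
Arguments ae_pull {d T R mu psi P}.
Arguments iter_meas {d T phi}.
Arguments iter_null {d T R mu phi}.


Section D.
Context (d : measure_display) (T : measurableType d) (R : realType)
  (mu : {measure set T -> \bar R}).
Import HBNNSimple.

Lemma dens (nu : {measure set T -> \bar R}) (g f : T -> \bar R) (E : set T) :
  measurable E -> measurable_fun setT g -> (forall x, 0 <= g x) ->
  (forall A, measurable A -> nu A = \int[mu]_(x in A) g x) ->
  (forall x, E x -> g x \is a fin_num) ->
  (forall x, 0 <= f x) -> measurable_fun E f ->
  \int[mu]_(x in E) (f x * g x) = \int[nu]_(x in E) f x.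
Proof.
move=> mE mg g0 gnu gfin f0 mf.
pose h := nnsfun_approx mE mf.
have -> : \int[nu]_(x in E) f x =
    lim (\int[nu]_(x in E) (EFin \o h n) x @[n --> \oo]).
  have fE x : E x -> f x = lim ((EFin \o h n) x @[n --> \oo]).
    by move=> Ex; apply/esym/cvg_lim => //; exact: cvg_nnsfun_approx.
  under eq_integral => x /[!inE] /fE -> //.
  apply: monotone_convergence => //.
  - move=> n; apply/measurable_EFinP.
    by apply: (measurable_funS measurableT) => //; exact/measurable_funP.
  - by move=> n x Ex //=; rewrite lee_fin.
  - by move=> x Ex a b ab; rewrite lee_fin; exact/lefP/nd_nnsfun_approx.
have -> : \int[mu]_(x in E) (f x * g x) =
    lim (\int[mu]_(x in E) ((EFin \o h n) \* g) x @[n --> \oo]).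
  have fg x : E x -> f x * g x = lim (((EFin \o h n) \* g) x @[n --> \oo]).
    by move=> Ex; apply/esym/cvg_lim => //; apply: cvgeZr;
      [exact: gfin|exact: cvg_nnsfun_approx].
  under eq_integral => x /[!inE] /fg -> //.
  apply: monotone_convergence => [//| | |].
  - move=> n; apply/emeasurable_funM; apply/measurable_funTS => //.
      exact/measurable_EFinP.
  - by move=> n x Ex /=; rewrite mule_ge0 ?lee_fin ?g0.
  - by move=> x Ex a b ab/=; rewrite lee_wpmul2r ?lee_fin ?g0//; exact/lefP/nd_nnsfun_approx.
suff suf n : \int[mu]_(x in E) ((EFin \o h n) x * g x) =
    \int[nu]_(x in E) (EFin \o h n) x.
  by under eq_fun do rewrite suf.
transitivity (\int[nu]_(x in E)
   (\sum_(y \in range (h n)) (y * \1_(h n @^-1` [set y]) x)%:E)); last first.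
  by apply: eq_integral => t tE; rewrite /= fimfunE -fsumEFin.
have indich m r : measurable_fun E (fun x => (r * \1_(h m @^-1` [set r]) x)%:E).
  by apply: (measurable_comp measurableT) => //; exact: measurable_funM.
rewrite ge0_integral_fsum//; last by move=> m y Ey; exact: nnfun_muleindic_ge0.
transitivity (\int[mu]_(x in E) (\sum_(y \in range (h n))
    (y * \1_(h n @^-1` [set y]) x)%:E * g x)).
  under [RHS]eq_integral => x xE.
    rewrite -ge0_mule_fsuml => [|y]; last exact: nnfun_muleindic_ge0.
    rewrite fsumEFin // -(fimfunE _ x); over.
  by [].
rewrite ge0_integral_fsum//; last 2 first.
  - move=> y; apply: emeasurable_funM; [exact: indich|exact: measurable_funTS].
  - by move=> m y Ey; rewrite mule_ge0 ?g0// nnfun_muleindic_ge0.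
apply: eq_fsbigr => r rhn.
under [RHS]eq_integral do rewrite EFinM.
rewrite integralZl_indic_nnsfun; last exact: mE.
under eq_integral do rewrite EFinM -muleA.
rewrite ge0_integralZl; [|exact: mE| | |].
- congr (_ * _).
  under eq_integral do rewrite muleC.
  rewrite (eq_integral (g \_ (h n @^-1` [set r]))); last first.
    by move=> x xE; rewrite epatch_indic.
  have mh : measurable (h n @^-1` [set r]).
    by rewrite -[X in measurable X]setTI; apply: (measurable_funP (h n)).
  rewrite -integral_mkcondr -gnu; last exact: measurableI.
  by rewrite integral_indic; [rewrite setIC|exact: mE|exact: mh].
- apply: emeasurable_funM; first exact/measurable_EFinP.
  exact/measurable_funTS.
- by move=> t Et; rewrite mule_ge0 ?lee_fin ?g0.
- by move: rhn; rewrite inE => -[t _ <-]; rewrite lee_fin.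
Qed.

Lemma cov1 (phi : T -> T) (mphi : measurable_fun setT phi) (h1 : T -> \bar R) :
  measurable_fun setT h1 -> (forall x, 0 <= h1 x) ->
  (forall A, measurable A -> mu (phi @^-1` A) = \int[mu]_(x in A) h1 x) ->
  forall E f, measurable E -> (forall x, E x -> h1 x \is a fin_num) ->
  (forall x, 0 <= f x) -> measurable_fun E f ->
  \int[mu]_(x in phi @^-1` E) f (phi x) = \int[mu]_(x in E) (f x * h1 x).
Proof.
move=> mh h0 hA E f mE hfin f0 mf.
rewrite (@dens (pushforward mu phi) h1 f E mE mh h0 _ hfin f0 mf); last first.
  by move=> A mA; rewrite -hA.
rewrite [RHS](ge0_integral_pushforward mphi) //.
Qed.
End D.
Arguments cov1 {d T R mu phi}.


Section U.
Context (d : measure_display) (T : measurableType d) (R : realType)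
  (mu : {measure set T -> \bar R}).

Lemma pm_meas (psi : T -> T) (g : T -> \bar R) :
  (forall D, measurable D -> measurable (psi @^-1` D)) ->
  preimage_measurable psi g -> measurable_fun setT g.
Proof.
move=> mpsi pg _ Y mY; rewrite setTI.
have [D [mD ->]] := pg Y mY; exact: mpsi.
Qed.

Arguments pm_meas {psi g}.

Lemma Enull (psi : T -> T) (g1 g2 : T -> \bar R) (B : set T) (a b : R) :
  (forall D, measurable D -> measurable (psi @^-1` D)) ->
  preimage_measurable psi g1 -> preimage_measurable psi g2 ->
  (forall x, 0 <= g2 x) ->
  measurable B -> mu (psi @^-1` B) < +oo ->
  (forall D, measurable D -> D `<=` B ->
     \int[mu]_(x in psi @^-1` D) g1 x = \int[mu]_(x in psi @^-1` D) g2 x) ->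
  (0 <= a)%R -> (a < b)%R ->
  mu.-negligible (psi @^-1` B `&` [set x | g2 x <= a%:E] `&` [set x | b%:E <= g1 x]).
Proof.
move=> mpsi pg1 pg2 g20 mB Bfin hI a0 ab.
have [D1 [mD1 eD1]] := pg2 _ (emeasurable_itv `]-oo, a%:E]).
have [D2 [mD2 eD2]] := pg1 _ (emeasurable_itv `[b%:E, +oo[).
pose D := B `&` D1 `&` D2.
have mD : measurable D by apply: measurableI => //; exact: measurableI.
have -> : psi @^-1` B `&` [set x | g2 x <= a%:E] `&` [set x | b%:E <= g1 x]
    = psi @^-1` D.
  apply/seteqP; split => x /=.
  - move=> [[Bx g2x] g1x]; split; [split|] => //.
    + have : (g2 @^-1` [set` `]-oo, a%:E]]) x by rewrite /= in_itv /= g2x.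
      by rewrite eD1.
    + have : (g1 @^-1` [set` `[b%:E, +oo[]) x by rewrite /= in_itv /= g1x.
      by rewrite eD2.
  - move=> [[Bx D1x] D2x]; split; [split|] => //.
    + have : (g2 @^-1` [set` `]-oo, a%:E]]) x by rewrite eD1.
      by rewrite /= in_itv /=.
    + have : (g1 @^-1` [set` `[b%:E, +oo[]) x by rewrite eD2.
      by rewrite /= in_itv /= andbT.
have Sg2 x : (psi @^-1` D) x -> g2 x <= a%:E.
  move=> [[_ D1x] _]; have : (g2 @^-1` [set` `]-oo, a%:E]]) x by rewrite eD1.
  by rewrite /= in_itv /=.
have Sg1 x : (psi @^-1` D) x -> b%:E <= g1 x.
  move=> [[_ _ D2x]]; have : (g1 @^-1` [set` `[b%:E, +oo[]) x by rewrite eD2.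
  by rewrite /= in_itv /= andbT.
have mS := mpsi D mD.
have SB : mu (psi @^-1` D) <= mu (psi @^-1` B).
  apply: le_measure; rewrite ?inE; [exact: mS|exact: mpsi|].
  by move=> x [[]].
have Sfin : mu (psi @^-1` D) \is a fin_num.
  by rewrite ge0_fin_numE ?measure_ge0 //; exact: le_lt_trans SB Bfin.
have mg1 : measurable_fun (psi @^-1` D) g1 := measurable_funTS (pm_meas mpsi pg1).
have mg2 : measurable_fun (psi @^-1` D) g2 := measurable_funTS (pm_meas mpsi pg2).
have H2 : \int[mu]_(x in psi @^-1` D) g2 x <= a%:E * mu (psi @^-1` D).
  rewrite -integral_cst //; apply: ge0_le_integral => //.
have H1 : b%:E * mu (psi @^-1` D) <= \int[mu]_(x in psi @^-1` D) g1 x.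
  rewrite -integral_cst //; apply: ge0_le_integral => //.
  by move=> x _; rewrite /= lee_fin; lra.
rewrite hI // in H1; last by move=> x [[]].
have := le_trans H1 H2; rewrite -(fineK Sfin) -!EFinM lee_fin => hab.
have m0 : (0 <= fine (mu (psi @^-1` D)))%R by rewrite fine_ge0 ?measure_ge0.
have m00 : fine (mu (psi @^-1` D)) = 0%R by nra.
exists (psi @^-1` D); split => //.
by rewrite -(fineK Sfin) m00.
Qed.

Arguments Enull {psi g1 g2 B a b}.

Lemma U_le (psi : T -> T) (g1 g2 : T -> \bar R) (B : nat -> nat -> set T) :
  (forall D, measurable D -> measurable (psi @^-1` D)) ->
  preimage_measurable psi g1 -> preimage_measurable psi g2 ->
  (forall x, 0 <= g2 x) ->
  (forall i j, measurable (B i j)) -> (forall i j, mu (psi @^-1` B i j) < +oo) ->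
  {ae mu, forall x, exists i j, B i j (psi x)} ->
  (forall i j D, measurable D -> D `<=` B i j ->
     \int[mu]_(x in psi @^-1` D) g1 x = \int[mu]_(x in psi @^-1` D) g2 x) ->
  {ae mu, forall x, g1 x <= g2 x}.
Proof.
move=> mpsi pg1 pg2 g20 mB Bfin cov hI.
pose a (p q : nat) : R := (p%:R / q.+1%:R)%R.
pose b (p q : nat) : R := (p.+1%:R / q.+1%:R)%R.
pose E i j p q := psi @^-1` B i j `&` [set x | g2 x <= (a p q)%:E] `&`
   [set x | (b p q)%:E <= g1 x].
have En i j p q : mu.-negligible (E i j p q).
  rewrite /E; apply: (Enull mpsi pg1 pg2 g20 (mB i j) (Bfin i j) (hI i j)).
  - by rewrite /a divr_ge0.
  - by rewrite /a /b ltr_pM2r ?invr_gt0 // ltr_nat.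
have nE : mu.-negligible (\bigcup_i \bigcup_j \bigcup_q \bigcup_p E i j p q).
  apply: negligible_bigcup => i; apply: negligible_bigcup => j.
  apply: negligible_bigcup => q; apply: negligible_bigcup => p; exact: En.
apply: (negligibleS _ (negligibleU cov nE)) => x /= /negP.
rewrite -ltNge => lt21.
case: (pselect (exists i j, B i j (psi x))) => [[i [j Bij]]|]; last by left.
right; exists i => //; exists j => //.
have [r g2r] : exists r : R, g2 x = r%:E.
  move: (g20 x) lt21; case: (g2 x) => [r _ _| |]; first by exists r.
    by move=> _; rewrite ltNge leey.
  by rewrite leeNy_eq.
have r0 : (0 <= r)%R by rewrite -lee_fin -g2r.
rewrite g2r in lt21.
case g1x: (g1 x) lt21 => [s| |] lt21.
- rewrite lte_fin in lt21.
  pose Q := (Num.truncn (2 / (s - r))).+1%:R : R.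
  have Q0 : (0 < Q)%R by rewrite /Q ltr0n.
  have hQ : (2 < (s - r) * Q)%R.
    rewrite mulrC -ltr_pdivrMr ?subr_gt0 //; exact: truncnS_gt.
  have t0 : (0 <= r * Q)%R by rewrite mulr_ge0 // ltW.
  have t1 := truncn_le (r * Q); rewrite t0 in t1.
  have t2 := truncnS_gt (r * Q).
  exists (Num.truncn (2 / (s - r))) => //; exists (Num.truncn (r * Q)).+1 => //.
  split; [split|] => //=.
  + by rewrite g2r lee_fin /a ler_pdivlMr // ltW.
  + rewrite g1x lee_fin /b ler_pdivrMr //.
    have -> : (Num.truncn (r * Q)).+2%:R = ((Num.truncn (r * Q))%:R + 2 :> R)%R.
      by rewrite -addn2 natrD.
    rewrite -/Q; nra.
- exists 0%N => //; exists (Num.truncn r).+1 => //.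
  split; [split|] => //=.
  + by rewrite g2r lee_fin /a ler_pdivlMr // mulr1 ltW // truncnS_gt.
  + by rewrite g1x leey.
- by rewrite ltNge leNye in lt21.
Qed.

Arguments U_le {psi g1 g2 B}.

Lemma U_eq (psi : T -> T) (g1 g2 : T -> \bar R) (B : nat -> nat -> set T) :
  (forall D, measurable D -> measurable (psi @^-1` D)) ->
  preimage_measurable psi g1 -> preimage_measurable psi g2 ->
  (forall x, 0 <= g1 x) -> (forall x, 0 <= g2 x) ->
  (forall i j, measurable (B i j)) -> (forall i j, mu (psi @^-1` B i j) < +oo) ->
  {ae mu, forall x, exists i j, B i j (psi x)} ->
  (forall i j D, measurable D -> D `<=` B i j ->
     \int[mu]_(x in psi @^-1` D) g1 x = \int[mu]_(x in psi @^-1` D) g2 x) ->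
  {ae mu, forall x, g1 x = g2 x}.
Proof.
move=> mpsi pg1 pg2 g10 g20 mB Bfin cov hI.
have h12 := U_le mpsi pg1 pg2 g20 mB Bfin cov hI.
have h21 : {ae mu, forall x, g2 x <= g1 x}.
  apply: (U_le mpsi pg2 pg1 g10 mB Bfin cov) => i j D mD DB.
  by rewrite (hI i j D mD DB).
move: h12 h21; apply: filterS2 => x a b; apply/eqP; by rewrite eq_le a b.
Qed.

Lemma measurable_inv : measurable_fun setT (@GRing.inv R).
Proof.
have -> : [set: R] = [set x | x = 0%R] `|` [set x | x != 0%R].
  apply/seteqP; split => x //= _; case: (eqVneq x 0%R); [left|right] => //.
apply/measurable_funU.
- exact: measurable_set1.
- by apply: open_measurable; exact: open_neq.
split; first exact: measurable_fun_set1.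
apply: open_continuous_measurable_fun; first exact: open_neq.
by move=> x; rewrite inE => xD; exact: inv_continuous.
Qed.

End U.
Arguments U_eq {d T R mu psi g1 g2 B}.
Arguments pm_meas {d T R psi g}.

Theorem proposition26 (d : measure_display) (T : measurableType d) (R : realType)
  (mu : {measure set T -> \bar R}) (phi : T -> T)
  (h : nat -> T -> \bar R) :
  sigma_finite setT mu ->
  nonsingular mu phi ->
  (forall n, is_RN_deriv_iter mu phi n (h n)) ->
  {ae mu, forall x, h 1%N x < +oo} ->
  ( (forall n : nat, (0 < n)%N -> condexp_fixed mu phi (h n))
    <->
    (forall n : nat, (0 < n)%N ->
       {ae mu, forall x, h n.+1 (phi x) = h 1%N (phi x) * h n x}) )
  /\
  ( (forall n : nat, (0 < n)%N -> condexp_fixed mu phi (h n)) ->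
    (forall m n : nat, (0 < n)%N ->
       {ae mu, forall x, h (m + n)%N (iter n phi x) =
          (\prod_(1 <= k < n.+1) h 1%N (iter k phi x)) * h m x})
    /\
    (forall m n : nat, (0 < n)%N ->
       {ae mu, forall x, h (m + n)%N (iter n phi x) =
          h n (iter n phi x) * h m x})
    /\
    (forall n : nat, (0 < n)%N ->
       {ae mu, forall x, h n (iter n phi x) =
          \prod_(1 <= k < n.+1) h 1%N (iter k phi x)})
    /\
    (forall n : nat,
       {ae mu, forall x, h n.+1 (iter n phi x) =
          \prod_(0 <= k < n.+1) h 1%N (iter k phi x)}) ).
Proof.
move=> [F Feq Ffin] [mphi ns] hRN h1fin.
have mh n : measurable_fun setT (h n) by case: (hRN n).
have h0 n x : 0 <= h n x by case: (hRN n) => _ [].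
have hA n A : measurable A -> mu (iter n phi @^-1` A) = \int[mu]_(x in A) h n x.
  by case: (hRN n) => _ [] _; apply.
have mpre D : measurable D -> measurable (phi @^-1` D).
  by move=> mD; rewrite -[X in measurable X]setTI; exact: mphi.
have nullpull N : measurable N -> mu N = 0 ->
    measurable (phi @^-1` N) /\ mu (phi @^-1` N) = 0.
  by move=> mN N0; split; [exact: mpre|exact: ns].
have nullit := iter_null (conj mphi ns).
have fin1 : {ae mu, forall x, h 1%N (phi x) < +oo} := ae_pull nullpull h1fin.
have mlev (f : T -> \bar R) (c : \bar R) : measurable_fun setT f ->
    measurable [set y | f y <= c].
  move=> mf; have -> : [set y | f y <= c] = f @^-1` [set` `]-oo, c]].
    by apply/seteqP; split => y; rewrite /= in_itv.
  rewrite -[X in measurable X]setTI; apply: mf => //; exact: emeasurable_itv.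
have mpos (f : T -> \bar R) : measurable_fun setT f ->
    measurable [set y | 0 < f y].
  move=> mf; have -> : [set y | 0 < f y] = f @^-1` [set` `]0, +oo]].
    by apply/seteqP; split => y; rewrite /= in_itv /= ?leey ?andbT.
  rewrite -[X in measurable X]setTI; apply: mf => //; exact: emeasurable_itv.
have pos1 : {ae mu, forall x, 0 < h 1%N (phi x)}.
  pose Z := h 1%N @^-1` [set 0].
  have mZ : measurable Z.
    rewrite -[X in measurable X]setTI; apply: (mh 1%N) => //; exact: emeasurable_set1.
  exists (phi @^-1` Z); split; first exact: mpre.
  - have -> : phi @^-1` Z = iter 1 phi @^-1` Z by [].
    rewrite hA //; rewrite (eq_integral (cst 0)) ?integral0 //.
    by move=> x; rewrite inE.
  - move=> x /= hx; rewrite /Z /=; apply/eqP; rewrite eq_le h0 andbT leNgt.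
    by apply/negP.
have Fin i : measurable (F i) /\ mu (F i) < +oo := Ffin i.
have h0one : {ae mu, forall x, h 0%N x = 1}.
  have pmid (g : T -> \bar R) : measurable_fun setT g -> preimage_measurable id g.
    move=> mg Y mY; exists (g @^-1` Y); split => //.
    by rewrite -[X in measurable X]setTI; exact: mg.
  apply: (U_eq (psi := id) (B := fun i j => F i)).
  - by move=> D mD.
  - exact: pmid.
  - exact: pmid (measurable_cst _).
  - exact: h0.
  - by move=> x /=; rewrite lee01.
  - by move=> i j; case: (Fin i).
  - by move=> i j; case: (Fin i).
  - apply: aeW => x.
    have : [set: T] x by [].
    by rewrite Feq => -[i _ Fi]; exists i, 0%N.
  - move=> i j D mD _.
    rewrite (_ : id @^-1` D = D) // integral_cst // mul1e -(hA 0%N D mD).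
    by [].
pose k n y := h n.+1 y * ((fine (h 1%N y))^-1)%:E.
have mk n : measurable_fun setT (k n).
  apply: emeasurable_funM; first exact: mh.
  apply/measurable_EFinP; apply: measurableT_comp; first exact: measurable_inv.
  apply: measurableT_comp; [exact: fine_measurable|exact: mh].
have k0 n y : 0 <= k n y by rewrite mule_ge0 // lee_fin invr_ge0 fine_ge0.
have pmk n : preimage_measurable phi (fun x => k n (phi x)).
  move=> Y mY; exists (k n @^-1` Y); split => //.
  rewrite -[X in measurable X]setTI; exact: mk.
have kpt (a b : \bar R) (r : R) : (0 < r)%R ->
    (a = r%:E * b <-> a * ((fine r%:E)^-1)%:E = b).
  move=> r0 /=; split => [->|<-].
  - by rewrite muleAC -EFinM mulfV ?gt_eqF // mul1e.
  - by rewrite muleCA -EFinM mulfV ?gt_eqF // mule1.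
have pt1 : {ae mu, forall x, exists r : R, (0 < r)%R /\ h 1%N (phi x) = r%:E}.
  move: fin1 pos1; apply: filterS2 => x hf hp.
  exists (fine (h 1%N (phi x))); split; first by rewrite fine_gt0 // hp hf.
  by rewrite fineK // ge0_fin_numE // ltW.
have indint (f : T -> \bar R) D :
    \int[mu]_(x in phi @^-1` D) f x = \int[mu]_x ((\1_D (phi x))%:E * f x).
  rewrite integral_mkcond; apply: eq_integral => x _; rewrite patchE indicE.
  have -> : (phi x \in D) = (x \in phi @^-1` D).
    by apply/idP/idP => /set_mem H; apply/mem_set.
  by case: ifP => _; rewrite ?mul1e ?mul0e.
have ii_i n : (0 < n)%N ->
    {ae mu, forall x, h n.+1 (phi x) = h 1%N (phi x) * h n x} ->
    condexp_fixed mu phi (h n).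
  move=> n0 hyp.
  have e : {ae mu, forall x, k n (phi x) = h n x}.
    move: hyp pt1; apply: filterS2 => x hx [r [r0 hr]].
    rewrite /k; move: hx; rewrite hr; exact: (proj1 (kpt _ _ _ r0)).
  exists (fun x => k n (phi x)); split; last exact: e.
  split; [exact: pmk | split; [by move=> x; exact: k0|]].
  move=> u mu_ u0.
  apply: ae_eq_integral.
  - exact: measurableT.
  - exact: emeasurable_funM (measurableT_comp mu_ mphi) (mh n).
  - exact: emeasurable_funM (measurableT_comp mu_ mphi) (measurableT_comp (mk n) mphi).
  - by move: e; apply: filterS => x ex _; rewrite ex.
have i_ii n : (0 < n)%N -> condexp_fixed mu phi (h n) ->
    {ae mu, forall x, h n.+1 (phi x) = h 1%N (phi x) * h n x}.
  move=> n0 [g [[pg [g0 gE]] gh]].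
  pose B i j := F i `&` [set y | h 1%N y <= (j%:R)%:E] `&` [set y | 0 < h 1%N y].
  have mB i j : measurable (B i j).
    apply: measurableI; last exact: mpos.
    apply: measurableI; [by case: (Fin i)|exact: mlev].
  have gk : {ae mu, forall x, g x = k n (phi x)}.
    apply: (U_eq (psi := phi) (B := B)).
    - exact: mpre.
    - exact: pg.
    - exact: pmk.
    - exact: g0.
    - by move=> x; exact: k0.
    - exact: mB.
    - move=> i j.
      rewrite (_ : phi @^-1` B i j = iter 1 phi @^-1` B i j) // hA //.
      apply: (@le_lt_trans _ _ (\int[mu]_(x in B i j) (cst ((j%:R)%:E)) x)).
        apply: ge0_le_integral => //.
        - exact: measurable_funTS (mh 1%N).
        - by move=> x [[_ hx] _].
      rewrite integral_cst //; apply: lte_mul_pinfty => //.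
      apply: (@le_lt_trans _ _ (mu (F i))); last by case: (Fin i).
      apply: le_measure; rewrite ?inE //; [by case: (Fin i)|by move=> x [[]]].
    - move: pt1; apply: filterS => x [r [r0 hr]].
      have : [set: T] (phi x) by [].
      rewrite Feq => -[i _ Fi]; exists i, (Num.truncn r).+1.
      split; [split|] => //=; rewrite hr.
        by rewrite lee_fin ltW // truncnS_gt.
      by rewrite lte_fin.
    - move=> i j D mD DB.
      have mu_ : measurable_fun setT (fun y => (\1_D y)%:E : \bar R).
        by apply/measurable_EFinP; exact: measurable_indic.
      have u0 y : 0 <= (\1_D y)%:E :> \bar R by rewrite lee_fin.
      rewrite (indint g D) -(gE _ mu_ u0) -indint.
      rewrite -(hA n _ (mpre D mD)).
      rewrite (_ : iter n phi @^-1` (phi @^-1` D) = iter n.+1 phi @^-1` D) //.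
      rewrite (hA n.+1 D mD).
      rewrite (cov1 mphi (h 1%N) (mh 1%N) (h0 1%N) (fun A mA => hA 1%N A mA) D (k n) mD);
        last first.
      + exact: measurable_funTS (mk n).
      + exact: k0.
      + move=> y Dy; have [[_ hy] hp] := DB y Dy.
        by rewrite ge0_fin_numE // (le_lt_trans hy) // ltry.
      apply: eq_integral => y /set_mem Dy.
      have [[_ hy] hp] := DB y Dy.
      have hf : h 1%N y \is a fin_num by rewrite ge0_fin_numE // (le_lt_trans hy) // ltry.
      have r0 : (0 < fine (h 1%N y))%R by rewrite fine_gt0 // hp (le_lt_trans hy) // ltry.
      rewrite /k -{2}(fineK hf) [RHS]muleC.
      by apply: (proj2 (kpt _ _ _ r0)).
  have gg : {ae mu, forall x, k n (phi x) = h n x}.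
    by move: gk gh; apply: filterS2 => x <-.
  move: gg pt1; apply: filterS2 => x e [r [r0 hr]].
  rewrite -e /k hr; by apply: (proj2 (kpt _ _ _ r0)).
have ii' : (forall n : nat, (0 < n)%N -> condexp_fixed mu phi (h n)) ->
    forall n, {ae mu, forall x, h n.+1 (phi x) = h 1%N (phi x) * h n x}.
  move=> Hi [|n]; last by apply: i_ii; [|exact: Hi].
  by move: h0one; apply: filterS => x ->; rewrite mule1.
split.
  split => H n n0; [exact: i_ii n n0 (H n n0) | exact: ii_i n n0 (H n n0)].
move=> Hi.
have G m n : {ae mu, forall x, h (m + n)%N (iter n phi x) =
    (\prod_(1 <= i < n.+1) h 1%N (iter i phi x)) * h m x}.
  elim: n => [|n IH].
    by apply: aeW => x; rewrite addn0 big_geq // mul1e.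
  have := ae_pull (nullit n) (ii' Hi (m + n)%N).
  move: IH; apply: filterS2 => x IHx e.
  rewrite addnS /= e big_nat_recr //= IHx.
  by rewrite muleA [X in X * h m x]muleC.
have V n : {ae mu, forall x, h n (iter n phi x) =
    \prod_(1 <= i < n.+1) h 1%N (iter i phi x)}.
  by move: (G 0%N n) h0one; apply: filterS2 => x; rewrite add0n => -> ->; rewrite mule1.
split; first by move=> m n _; exact: G.
split.
  by move=> m n _; move: (G m n) (V n); apply: filterS2 => x -> ->.
split; first by move=> n _; exact: V.
move=> n; move: (G 1%N n); apply: filterS => x; rewrite add1n => ->.
rewrite [RHS]big_ltn //; exact: muleC.
Qed.
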